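(* Let $\mathsf{P}:\mathcal{B}(\mathbb{C})\to\mathcal{L}(\mathcal{H})$ be a phase shift covariant phase space observable whose angle margin is the canonical phase, i.e.\ $\mathsf{P}(\mathbb{R}_+\times\Theta)=\mathsf{E}_{\mathrm{can}}(\Theta)$ for all $\Theta\in\mathcal{B}([0,2\pi))$. Then its radial margin is trivial: there is a probability measure $\nu$ on $\mathbb{R}_+$ with $\mathsf{P}(X\times[0,2\pi))=\nu(X)I$ for all $X\in\mathcal{B}(\mathbb{R}_+)$.
   Context: $\mathcal{H}\simeq L^2(\mathbb{R})$ with number basis $\{|n\rangle\}$ and number operator $N$. $\mathbb{C}\simeq\mathbb{R}_+\times[0,2\pi)$ via polar coordinates, $X\times\Theta=\{re^{i\theta}:r\in X,\theta\in\Theta\}$; $\dot{+}$ is addition modulo $2\pi$. A phase shift covariant phase space observable is a POVM $\mathsf{P}$ on $\mathcal{B}(\mathbb{C})$ with $e^{i\theta N}\mathsf{P}(X\times\Theta)e^{-i\theta N}=\mathsf{P}(X\times(\Theta\dot{+}\theta))$ for all $X,\Theta,\theta$. The canonical phase is $\mathsf{E}_{\mathrm{can}}(\Theta)=\sum_{m,n=0}^\infty\frac{1}{2\pi}\int_\Theta e^{i(m-n)\theta}d\theta\,|m\rangle\langle n|$. *)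

(* Defs.v *)
From HB Require Import structures.
From mathcomp Require Import all_boot all_order all_algebra.
From mathcomp Require Import all_classical all_reals all_analysis.
From mathcomp Require complex.
Export complex.ComplexField.
Import numFieldNormedType.Exports.
Set Implicit Arguments. Unset Strict Implicit. Unset Printing Implicit Defensive.
Import Order.TTheory GRing.Theory Num.Theory.
Local Open Scope classical_set_scope.
Local Open Scope ring_scope.

Notation Cplx R := (complex.complex R).

Section Defs.
Variable R : realType.

Definition expi (t : R) : Cplx R := complex.Complex (cos t) (sin t).

(* The complex plane is modelled as R*R (real part, imaginary part) with its
   product (= Borel) sigma-algebra.  X x Theta = { r e^{i theta} }. *)
Definition polar_set (X Th : set R) : set (R * R) :=
  [set z | exists r t, X r /\ Th t /\ z = (r * cos t, r * sin t)].

Definition Rplus : set R := `[0, +oo[%classic.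
Definition Angles : set R := `[0, 2 * pi[%classic.

Definition addmod2pi (s t : R) : R :=
  (s + t) - 2 * pi * (Num.floor ((s + t) / (2 * pi)))%:~R.

Definition shift_angles (Th : set R) (t : R) : set R :=
  [set addmod2pi s t | s in Th].

(* An operator on H = L^2(R) is represented by its matrix
   <m| A |n> in the number basis {|n>}. *)
Definition opmat := nat -> nat -> Cplx R.

Definition cR (x : R) : Cplx R := complex.Complex x 0.

(* <x| A |x> for the finitely supported vector x = sum_{n<N} x n |n> *)
Definition cconj (z : Cplx R) : Cplx R :=
  complex.Complex (complex.Re z) (- complex.Im z).

Definition qform (A : opmat) (N : nat) (x : nat -> Cplx R) : Cplx R :=
  \sum_(m < N) \sum_(n < N) cconj (x m) * A m n * x n.

(* POVM on the Borel sets of C, given by matrix elements: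
   positivity, normalization P(C) = I, and (weak) sigma-additivity. *)
Definition is_POVM (P : set (R * R) -> opmat) : Prop :=
  [/\ (forall A, measurable A -> forall N x,
         complex.Im (qform (P A) N x) = 0 /\ 0 <= complex.Re (qform (P A) N x)),
      (forall m n, P setT m n = ((m == n)%:R : Cplx R)) &
      (forall F : nat -> set (R * R), (forall k, measurable (F k)) ->
         trivIset setT F -> forall m n,
         ((fun K : nat => \sum_(k < K) complex.Re (P (F k) m n)) @ \oo -->
            (complex.Re (P (\bigcup_k F k) m n) : R)) /\
         ((fun K : nat => \sum_(k < K) complex.Im (P (F k) m n)) @ \oo -->
            (complex.Im (P (\bigcup_k F k) m n) : R)))].

(* e^{i theta N} P(X x Th) e^{-i theta N} = P(X x (Th +. theta)) *)
Definition phase_covariant (P : set (R * R) -> opmat) : Prop :=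
  forall X Th, measurable X -> X `<=` Rplus -> measurable Th -> Th `<=` Angles ->
  forall (t : R) (m n : nat),
    expi (t * m%:R) * P (polar_set X Th) m n * expi (- (t * n%:R))
    = P (polar_set X (shift_angles Th t)) m n.

(* canonical phase: <m|E_can(Th)|n> = (1/2pi) int_Th e^{i(m-n)t} dt *)
Definition Ecan (Th : set R) : opmat := fun m n =>
  complex.Complex
    ((2 * pi)^-1 * Rintegral lebesgue_measure Th
                     (fun t => cos ((m%:R - n%:R) * t)))
    ((2 * pi)^-1 * Rintegral lebesgue_measure Th
                     (fun t => sin ((m%:R - n%:R) * t))).

End Defs.

Arguments Angles R : clear implicits.
Arguments Rplus R : clear implicits.

(* Main.v *)
Require Import Defs.
From HB Require Import structures.
From mathcomp Require Import all_boot all_order all_algebra.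
From mathcomp Require Import all_classical all_reals all_analysis.
From mathcomp Require complex.
From mathcomp Require Import ring lra zify measurable_realfun.
Import Order.TTheory GRing.Theory Num.Theory.
Import numFieldNormedType.Exports.
Local Open Scope classical_set_scope.
Local Open Scope ring_scope.
Set Implicit Arguments. Unset Strict Implicit. Unset Printing Implicit Defensive.


Section Basic.
Variable R : realType.

Lemma ReD (x y : Cplx R) : complex.Re (x + y) = complex.Re x + complex.Re y.
Proof. by case: x => a b; case: y => c d. Qed.
Lemma ImD (x y : Cplx R) : complex.Im (x + y) = complex.Im x + complex.Im y.
Proof. by case: x => a b; case: y => c d. Qed.
Lemma Re_sum I (r : seq I) (Q : pred I) (F : I -> Cplx R) :
  complex.Re (\sum_(i <- r | Q i) F i) = \sum_(i <- r | Q i) complex.Re (F i).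
Proof. exact: (big_morph _ ReD). Qed.
Lemma Im_sum I (r : seq I) (Q : pred I) (F : I -> Cplx R) :
  complex.Im (\sum_(i <- r | Q i) F i) = \sum_(i <- r | Q i) complex.Im (F i).
Proof. exact: (big_morph _ ImD). Qed.
Lemma ceqP (x y : Cplx R) : complex.Re x = complex.Re y -> complex.Im x = complex.Im y -> x = y.
Proof. by case: x => a b; case: y => c d /= -> ->. Qed.

Lemma cvg_evcst (u : nat -> R) (c l : R) N :
  (forall n, (N <= n)%N -> u n = c) -> u @ \oo --> l -> l = c.
Proof.
move=> Hu Hl.
have Hc : u @ \oo --> c.
  apply: cvg_near_cst; near=> n; apply: Hu; near: n; exact: nbhs_infty_ge.
by rewrite -(cvg_lim (@Rhausdorff R) Hl) (cvg_lim (@Rhausdorff R) Hc).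
Unshelve. all: end_near.
Qed.

Lemma cvg_lin0 (c l : R) : (fun K : nat => c *+ K) @ \oo --> l -> c = 0.
Proof.
move=> H.
have H1 : (fun K : nat => c *+ K.+1) @ \oo --> l by rewrite (cvg_shiftS (fun K => c *+ K)).
have H2 := cvgB H1 H.
have H3 : ((fun K : nat => c *+ K.+1) - (fun K : nat => c *+ K)) = (fun=> c).
  by apply/funext => K; change (c *+ K.+1 - c *+ K = c); rewrite mulrS addrK.
rewrite H3 subrr in H2.
have H4 : (fun=> c) @ \oo --> c by exact: cvg_cst.
by rewrite -(cvg_lim (@Rhausdorff R) H4) (cvg_lim (@Rhausdorff R) (H2 _)).
Qed.
End Basic.


Section Povm.
Variable R : realType.
Variable P : set (R * R) -> opmat R.
Hypothesis HP : is_POVM P.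

Lemma P0 m n : P set0 m n = 0.
Proof.
case: HP => _ _ /(_ (fun=> set0) (fun=> measurable0) (@trivIset_set0 _ _ setT) m n) [H1 H2].
have E : \bigcup_(k : nat) (set0 : set (R * R)) = set0.
  by apply/funext => x; apply/propext; split => //; case.
rewrite E in H1 H2.
apply: ceqP; rewrite /=.
  apply: cvg_lin0; apply: cvg_trans H1.
  by apply: near_eq_cvg; near=> K; rewrite sumr_const card_ord.
apply: cvg_lin0; apply: cvg_trans H2.
by apply: near_eq_cvg; near=> K; rewrite sumr_const card_ord.
Unshelve. all: end_near.
Qed.

Lemma Padd2 A B m n : measurable A -> measurable B -> A `&` B = set0 ->
  P (A `|` B) m n = P A m n + P B m n.
Proof.
move=> mA mB AB.
pose F (k : nat) := if k == 0%N then A else if k == 1%N then B else set0.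
have mF : forall k, measurable (F k).
  by move=> k; rewrite /F; case: ifP => _ //; case: ifP.
have tF : trivIset setT F.
  move=> i j _ _ [x [Hi Hj]].
  move: i j Hi Hj => [|[|i]] [|[|j]] //= Hi Hj; try by case: Hi; try by case: Hj.
  - by have : (A `&` B) x by []; rewrite AB.
  - by have : (A `&` B) x by []; rewrite AB.
have UF : \bigcup_k F k = A `|` B.
  apply/seteqP; split => x.
    by case=> k _; rewrite /F; case: ifP => _; [left|case: ifP => _; [right|]].
  by case=> Hx; [exists 0%N | exists 1%N].
case: HP => _ _ /(_ F mF tF m n) [H1 H2].
rewrite UF in H1 H2.
have sumE (f : set (R * R) -> R) : f set0 = 0 -> forall K, (2 <= K)%N ->
    \sum_(k < K) f (F k) = f A + f B.
  move=> f0 K HK; case: K HK => [|[|K]] // _.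
  rewrite 2!big_ord_recl /= big1 ?addr0 //.
apply: ceqP; rewrite ?ReD ?ImD.
  apply: (cvg_evcst (N := 2%N)) H1 => K HK.
  by rewrite (sumE (fun S => complex.Re (P S m n))) // P0.
apply: (cvg_evcst (N := 2%N)) H2 => K HK.
by rewrite (sumE (fun S => complex.Im (P S m n))) // P0.
Qed.

End Povm.


Section Povm2.
Variable R : realType.
Variable P : set (R * R) -> opmat R.
Hypothesis HP : is_POVM P.

Lemma mem_bigsetU (F : nat -> set (R * R)) K x :
  (\big[setU/set0]_(k < K) F k) x -> exists2 k, (k < K)%N & F k x.
Proof.
elim: K => [|K IH]; first by rewrite big_ord0.
rewrite big_ord_recr /= => -[/IH [k Hk Fk]|Fx]; first by exists k => //; exact: ltnW.
by exists K.
Qed.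

Lemma Padd_big (F : nat -> set (R * R)) K m n :
  (forall k, (k < K)%N -> measurable (F k)) ->
  (forall i j, (i < K)%N -> (j < K)%N -> i != j -> F i `&` F j = set0) ->
  P (\big[setU/set0]_(k < K) F k) m n = \sum_(k < K) P (F k) m n.
Proof.
elim: K => [|K IH] mF dF; first by rewrite !big_ord0 P0.
rewrite !big_ord_recr /= Padd2 //; first rewrite IH //.
- by move=> k Hk; apply: mF; exact: ltnW.
- by move=> i j Hi Hj; apply: dF; exact: ltnW.
- by apply: bigsetU_measurable => k _; apply: mF; rewrite ltnS ltnW.
- exact: mF.
- apply/seteqP; split => // x [/mem_bigsetU [k Hk Fk] FK].
  have : (F k `&` F K) x by [].
  by rewrite dF // ?ltn_eqF // ltnW.
Qed.

Lemma sum_delta N m (g : nat -> R) : (m < N)%N ->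
  \sum_(i < N) ((i : nat) == m)%:R * g i = g m.
Proof.
move=> Hm; rewrite (bigD1 (Ordinal Hm)) //= eqxx mul1r big1 ?addr0 //.
move=> i Hi; suff -> : ((i : nat) == m) = false by rewrite mul0r.
by apply/negbTE; apply: contra Hi => /eqP Him; apply/eqP/val_inj.
Qed.

Lemma sum_delta2 N m n (g : nat -> R) a b : (m < N)%N -> (n < N)%N ->
  \sum_(i < N) (a * ((i : nat) == m)%:R + b * ((i : nat) == n)%:R) * g i
  = a * g m + b * g n.
Proof.
move=> Hm Hn.
rewrite (eq_bigr (fun i : 'I_N => a * (((i : nat) == m)%:R * g i) + b * (((i : nat) == n)%:R * g i))); last first.
  by move=> i _; rewrite mulrDl !mulrA.
by rewrite big_split /= -!mulr_sumr !sum_delta.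
Qed.

Lemma sum_delta2' N m n (g : nat -> R) a b : (m < N)%N -> (n < N)%N ->
  \sum_(i < N) g i * (a * ((i : nat) == m)%:R + b * ((i : nat) == n)%:R)
  = a * g m + b * g n.
Proof.
move=> Hm Hn; rewrite -(sum_delta2 g a b Hm Hn); apply: eq_bigr => i _; exact: mulrC.
Qed.

Lemma qform_ReIm (M : opmat R) N (u : nat -> R) :
  complex.Re (qform M N (fun i => cR (u i))) =
    \sum_(i < N) u i * \sum_(j < N) complex.Re (M i j) * u j /\
  complex.Im (qform M N (fun i => cR (u i))) =
    \sum_(i < N) u i * \sum_(j < N) complex.Im (M i j) * u j.
Proof.
rewrite /qform Re_sum Im_sum; split; apply: eq_bigr => i _;
  rewrite ?Re_sum ?Im_sum mulr_sumr; apply: eq_bigr => j _;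
  case: (M i j) => a b; rewrite /cconj /cR /=; ring.
Qed.

Definition psd (M : opmat R) := forall N x,
  complex.Im (qform M N x) = 0 /\ 0 <= complex.Re (qform M N x).

Lemma psd_diag M m : psd M -> complex.Im (M m m) = 0 /\ 0 <= complex.Re (M m m).
Proof.
move=> HM; have [H1 H2] := HM m.+1 (fun i => cR (1 * (i == m)%:R + 0 * (i == m)%:R)).
have [E1 E2] := qform_ReIm M m.+1 (fun i => 1 * (i == m)%:R + 0 * (i == m)%:R).
rewrite E1 E2 in H1 H2 => {E1 E2}.
rewrite (sum_delta2 (fun i => \sum_(j < m.+1) complex.Im (M i j) *
   (1 * ((j:nat) == m)%:R + 0 * ((j:nat) == m)%:R))) // in H1.
rewrite (sum_delta2 (fun i => \sum_(j < m.+1) complex.Re (M i j) *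
   (1 * ((j:nat) == m)%:R + 0 * ((j:nat) == m)%:R))) // in H2.
rewrite !(sum_delta2' (fun j => complex.Im (M m j))) // in H1.
rewrite !(sum_delta2' (fun j => complex.Re (M m j))) // in H2.
split; lra.
Qed.

Lemma psd_cs M m n : psd M -> m != n ->
  ((complex.Re (M m n) + complex.Re (M n m)) / 2) ^+ 2 <=
  complex.Re (M m m) * complex.Re (M n n).
Proof.
move=> HM mn.
have key : forall a b, 0 <= a * (a * complex.Re (M m m) + b * complex.Re (M m n))
                            + b * (a * complex.Re (M n m) + b * complex.Re (M n n)).
  move=> a b.
  pose N := (maxn m n).+1.
  have Hm : (m < N)%N by rewrite ltnS leq_maxl.
  have Hn : (n < N)%N by rewrite ltnS leq_maxr.
  have [_ H2] := HM N (fun i => cR (a * (i == m)%:R + b * (i == n)%:R)).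
  have [E1 _] := qform_ReIm M N (fun i => a * (i == m)%:R + b * (i == n)%:R).
  rewrite E1 in H2.
  rewrite (sum_delta2 (fun i => \sum_(j < N) complex.Re (M i j) *
     (a * ((j:nat) == m)%:R + b * ((j:nat) == n)%:R))) // in H2.
  rewrite (sum_delta2' (fun j => complex.Re (M m j))) // in H2.
  rewrite (sum_delta2' (fun j => complex.Re (M n j))) // in H2.
set p := complex.Re (M m m); set q := complex.Re (M n n).
set h := (complex.Re (M m n) + complex.Re (M n m)) / 2.
have K1 := key (- h) p. have K2 := key q (- h). have K3 := key 1 (- h).
have hE : complex.Re (M m n) + complex.Re (M n m) = 2 * h by rewrite /h; field.
have [_ p0] := psd_diag m HM. have [_ q0] := psd_diag n HM.
rewrite -/p -/q in p0 q0 K1 K2 K3.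
have K1' : 0 <= p * (p * q - h ^+ 2) by nra.
have K2' : 0 <= q * (p * q - h ^+ 2) by nra.
have K3' : 0 <= p - 2 * h ^+ 2 + h ^+ 2 * q by nra.
have [pp|] := ltP 0 p.
  by rewrite -subr_ge0; rewrite -(pmulr_rge0 _ pp).
rewrite le_eqVlt ltNge p0 orbF => /eqP p0'.
have [qq|] := ltP 0 q.
  by rewrite -subr_ge0; rewrite -(pmulr_rge0 _ qq).
rewrite le_eqVlt ltNge q0 orbF => /eqP q0'.
rewrite p0' q0' in K3' *; nra.
Qed.

End Povm2.


Section Geo.
Variable R : realType.

Lemma polar_norm (r t : R) : (r * cos t) ^+ 2 + (r * sin t) ^+ 2 = r ^+ 2.
Proof. by rewrite !exprMn -mulrDr cos2Dsin2 mulr1. Qed.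

Lemma sin_eq0_itv (u : R) : - pi < u < pi -> sin u = 0 -> u = 0.
Proof.
move=> /andP[h1 h2] su.
have [u0|u0|//] := ltgtP u 0.
  have : 0 < sin (- u) by apply: sin_gt0_pi; apply/andP; split; lra.
  by rewrite sinN su oppr0 ltxx.
have : 0 < sin u by apply: sin_gt0_pi; apply/andP; split; lra.
by rewrite su ltxx.
Qed.

Lemma angle_inj (t t' : R) : 0 <= t < 2 * pi -> 0 <= t' < 2 * pi ->
  cos t = cos t' -> sin t = sin t' -> t = t'.
Proof.
move=> /andP[h1 h2] /andP[h3 h4] ct st.
have c1 : cos (t - t') = 1 by rewrite cosB -ct -st -!expr2 cos2Dsin2.
set u := (t - t') / 2.
have tu : t - t' = u *+ 2 by rewrite /u -mulr_natr mulfVK.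
have su : sin u = 0.
  move: c1; rewrite tu cos_mulr2n cos2sin2 => H.
  have : sin u ^+ 2 = 0 by move: H; rewrite mulr2n; lra.
  by move/eqP; rewrite sqrf_eq0 => /eqP.
have := @sin_eq0_itv u; rewrite su => /(_ _ erefl) u0.
have : u = 0 by apply: u0; apply/andP; split; rewrite /u; lra.
by move=> u00; move: tu; rewrite u00 mul0rn => /eqP; rewrite subr_eq0 => /eqP.
Qed.

Lemma polar_inj (r r' t t' : R) : 0 < r -> 0 < r' ->
  0 <= t < 2 * pi -> 0 <= t' < 2 * pi ->
  (r * cos t, r * sin t) = (r' * cos t', r' * sin t') -> r = r' /\ t = t'.
Proof.
move=> r0 r'0 ht ht' [e1 e2].
have rr : r = r'.
  have := polar_norm r t; rewrite e1 e2 polar_norm => /eqP.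
  rewrite eqf_sqr => /orP[/eqP //|/eqP h]; lra.
split => //; subst r'.
apply: angle_inj => //.
  exact: (mulfI (negbT (gt_eqF r0)) e1).
exact: (mulfI (negbT (gt_eqF r0)) e2).
Qed.

Definition rotc (c : R) (z : R * R) : R * R :=
  (z.1 * cos c + z.2 * sin c, - z.1 * sin c + z.2 * cos c).

Lemma polar_rot (Z T : set R) (c : R) :
  polar_set Z [set t + c | t in T] = [set z | polar_set Z T (rotc c z)].
Proof.
apply/seteqP; split => z /=.
  move=> [r [_ [Zr [[t Tt <-] ->]]]].
  exists r, t; split => //; split => //.
  rewrite /rotc /=; congr (_, _).
    have := cosB (t + c) c; rewrite addrK => ->; ring.
  have := sinB (t + c) c; rewrite addrK => ->; ring.
move=> [r [t [Zr [Tt]]]]; rewrite /rotc /= => -[e1 e2].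
exists r, (t + c); split => //; split; first by exists t.
have cs := cos2Dsin2 c.
case: z e1 e2 => x y /= e1 e2.
congr (_, _).
  rewrite cosD mulrBr !mulrA -e1 -e2.
  transitivity (x * (cos c ^+ 2 + sin c ^+ 2)); first by rewrite cs mulr1.
  ring.
rewrite sinD mulrDr !mulrA -e1 -e2.
transitivity (y * (cos c ^+ 2 + sin c ^+ 2)); first by rewrite cs mulr1.
ring.
Qed.

Lemma sector_char (Z : set R) (a : R) : Z `<=` `]0, +oo[%classic ->
  0 < a < pi / 2 ->
  polar_set Z `[0, a[%classic =
  [set z | 0 < z.1 /\ 0 <= z.2 /\ 0 < z.1 * sin a - z.2 * cos a /\
           Z (Num.sqrt (z.1 ^+ 2 + z.2 ^+ 2))].
Proof.
move=> Zpos /andP[a0 api].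
have pi0 := pi_gt0 R.
apply/seteqP; split => z /=.
  move=> [r [t [Zr [Tt ->]]]] /=.
  have r0 : 0 < r by have := Zpos _ Zr; rewrite /= in_itv /= andbT.
  move: Tt; rewrite /= in_itv /= => /andP[t0 ta].
  split; first by rewrite mulr_gt0 // cos_gt0_pihalf //; apply/andP; split; lra.
  split; first by apply: mulr_ge0; [exact: ltW | apply: sin_ge0_pi; apply/andP; split; lra].
  split.
    have : 0 < sin (a - t) by apply: sin_gt0_pi; apply/andP; split; lra.
    rewrite sinB => h.
    have -> : r * cos t * sin a - r * sin t * cos a = r * (sin a * cos t - cos a * sin t) by ring.
    by rewrite mulr_gt0.
  by rewrite polar_norm sqrtr_sqr gtr0_norm.
case: z => x y /= [x0 [y0 [hxy Zr]]].
set r := Num.sqrt (x ^+ 2 + y ^+ 2).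
have r0 : 0 < r by rewrite sqrtr_gt0; nra.
have r2 : r ^+ 2 = x ^+ 2 + y ^+ 2 by rewrite sqr_sqrtr //; nra.
have xr : x <= r by have := sqr_ge0 y; nra.
have xr1 : -1 <= x / r <= 1.
  apply/andP; split.
    have : 0 <= x / r by rewrite divr_ge0 // ltW.
    lra.
  by rewrite ler_pdivrMr // mul1r.
set t := acos (x / r).
have ct : cos t = x / r by rewrite /t acosK // in_itv.
have st : sin t = y / r.
  rewrite /t sin_acos //.
  have -> : 1 - (x / r) ^+ 2 = (y / r) ^+ 2.
    rewrite !expr_div_n r2; field; nra.
  by rewrite sqrtr_sqr ger0_norm // divr_ge0 // ltW.
have ex : x = r * cos t by rewrite ct mulrC divfK // gt_eqF.
have ey : y = r * sin t by rewrite st mulrC divfK // gt_eqF.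
exists r, t; split => //; split; last by rewrite -ex -ey.
rewrite /= in_itv /=; apply/andP; split; first by rewrite acos_ge0.
rewrite ltNge; apply/negP => at_.
have tpi : t <= pi by rewrite acos_lepi.
have : 0 <= sin (t - a) by apply: sin_ge0_pi; apply/andP; split; lra.
rewrite sinB.
have : 0 < r * (sin a * cos t - cos a * sin t).
  by move: hxy; rewrite ex ey => h; have -> : r * (sin a * cos t - cos a * sin t) = r * cos t * sin a - r * sin t * cos a by ring.
rewrite pmulr_rgt0 //; lra.
Qed.

End Geo.


Section Meas.
Variable R : realType.

Lemma meas_pre (g : R * R -> R) (B : set R) :
  measurable_fun setT g -> measurable B -> measurable [set z | B (g z)].
Proof. by move=> mg mB; have := mg measurableT B mB; rewrite setTI. Qed.

Lemma mfun_lin (a b : R) : measurable_fun setT (fun z : R * R => z.1 * a + z.2 * b).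
Proof.
apply: measurable_funD.
  by apply: measurable_funM; [exact: measurable_fst | exact: measurable_cst].
by apply: measurable_funM; [exact: measurable_snd | exact: measurable_cst].
Qed.

Definition alpha (k : nat) : R := 2 * pi / k%:R.
Definition Thj (k j : nat) : set R := `[j%:R * alpha k, j.+1%:R * alpha k[%classic.

Lemma Thj_shift k j : Thj k j = [set t + j%:R * alpha k | t in `[0, alpha k[%classic].
Proof.
rewrite /Thj; apply/seteqP; split => t /=.
  rewrite in_itv /= => /andP[h1 h2]; exists (t - j%:R * alpha k); last by rewrite subrK.
  by rewrite /= in_itv /= subr_ge0 h1 /=; move: h2; rewrite -natr1 mulrDl mul1r; lra.
move=> [s]; rewrite /= !in_itv /= => /andP[h1 h2] <-.
apply/andP; split; first lra.
by rewrite -natr1 mulrDl mul1r; lra.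
Qed.

Lemma sector_meas (Z : set R) k j : measurable Z -> Z `<=` `]0, +oo[%classic ->
  0 < alpha k < pi / 2 -> measurable (polar_set Z (Thj k j)).
Proof.
move=> mZ Zpos ha.
rewrite Thj_shift polar_rot (sector_char Zpos ha) /=.
set c := j%:R * alpha k; set a := alpha k.
have -> : [set z | 0 < (rotc c z).1 /\ 0 <= (rotc c z).2 /\
      0 < (rotc c z).1 * sin a - (rotc c z).2 * cos a /\
      Z (Num.sqrt ((rotc c z).1 ^+ 2 + (rotc c z).2 ^+ 2))] =
    [set z | `]0, +oo[%classic ((fun z : R * R => z.1 * cos c + z.2 * sin c) z)] `&`
    ([set z | `[0, +oo[%classic ((fun z : R * R => z.1 * (- sin c) + z.2 * cos c) z)] `&`
    ([set z | `]0, +oo[%classic ((fun z : R * R => z.1 * (cos c * sin a + sin c * cos a) + z.2 * (sin c * sin a - cos c * cos a)) z)] `&`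
     [set z | Z ((fun z : R * R => Num.sqrt ((z.1 * cos c + z.2 * sin c) ^+ 2 + (z.1 * (- sin c) + z.2 * cos c) ^+ 2)) z)])).
  apply/seteqP; split => z /=; rewrite /rotc /= !in_itv /= !andbT.
    move=> [h1 [h2 [h3 h4]]]; split => //; split; first by rewrite mulrN -mulNr.
    split; last by rewrite mulrN -mulNr.
    by move: h3; congr (0 < _); ring.
  move=> [h1 [h2 [h3 h4]]]; split => //; split; first by move: h2; rewrite mulrN -mulNr.
  split; last by move: h4; rewrite mulrN -mulNr.
  by move: h3; congr (0 < _); ring.
apply: measurableI; first by apply: meas_pre; [exact: mfun_lin | exact: measurable_itv].
apply: measurableI; first by apply: meas_pre; [exact: mfun_lin | exact: measurable_itv].
apply: measurableI; first by apply: meas_pre; [exact: mfun_lin | exact: measurable_itv].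
apply: meas_pre => //.
apply: measurableT_comp; first exact: continuous_measurable_fun (@sqrt_continuous R).
by apply: measurable_funD; apply: measurable_funX; exact: mfun_lin.
Qed.

End Meas.


Section Ang.
Variable R : realType.
Local Notation pi := (@pi R).
Local Notation al := (@alpha R).
Local Notation Th := (@Thj R).

Lemma tpi_gt0 : 0 < 2 * pi. Proof. by rewrite mulr_gt0 // pi_gt0. Qed.

Lemma addmod_itv (s t : R) : 0 <= addmod2pi s t < 2 * pi.
Proof.
rewrite /addmod2pi; set x := (s + t) / (2 * pi).
have := floor_itv x; rewrite intrD => /andP[h1 h2].
have st : s + t = 2 * pi * x by rewrite /x mulrC divfK // gt_eqF // tpi_gt0.
have tp := tpi_gt0.
rewrite st; apply/andP; split; nra.
Qed.

Lemma addmod_id (s t : R) : 0 <= s + t < 2 * pi -> addmod2pi s t = s + t.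
Proof.
move=> /andP[h1 h2]; rewrite /addmod2pi.
suff -> : Num.floor ((s + t) / (2 * pi)) = 0 by rewrite mulr0 subr0.
have tp := tpi_gt0.
apply/eqP; rewrite eq_le floor_le0 floor_ge0; apply/andP; split.
  by rewrite ltr_pdivrMr // mul1r.
by rewrite divr_ge0 // ltW.
Qed.

Lemma int_small (N : int) : -1 < (N%:~R : R) < 1 -> N = 0.
Proof.
move=> /andP[h1 h2].
have : (-1 < N)%R by rewrite -(ltr_int R) (_ : (-1)%:~R = -1 :> R) // mulrN1z.
have : (N < 1)%R by rewrite -(ltr_int R).
lia.
Qed.

Lemma shift_Angles (t : R) : shift_angles (Angles R) t = Angles R.
Proof.
rewrite /shift_angles /Angles; apply/seteqP; split => u /=.
  by move=> [s _ <-]; rewrite in_itv /= addmod_itv.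
rewrite in_itv /= => hu.
exists (addmod2pi u (- t)); first by rewrite /= in_itv /= addmod_itv.
have h := addmod_itv (addmod2pi u (- t)) t.
move: h; rewrite /addmod2pi.
set a := Num.floor ((u + - t) / (2 * pi)).
set b := Num.floor ((u + - t - 2 * pi * a%:~R + t) / (2 * pi)).
have -> : u + - t - 2 * pi * a%:~R + t - 2 * pi * b%:~R = u - 2 * pi * (a + b)%:~R.
  by rewrite intrD; ring.
move=> h.
have tp := tpi_gt0.
suff -> : a + b = 0 by rewrite mulr0 subr0.
apply: int_small; move: h hu => /andP[h1 h2] /andP[h3 h4].
apply/andP; split; nra.
Qed.

Lemma alpha_gt0 k : (0 < k)%N -> 0 < al k.
Proof. by move=> k0; rewrite /alpha divr_gt0 ?tpi_gt0 // ltr0n. Qed.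

Lemma alpha_k k : (0 < k)%N -> k%:R * al k = 2 * pi.
Proof. by move=> k0; rewrite /alpha mulrC divfK // pnatr_eq0 -lt0n. Qed.

Lemma Thj_sub k j : (j < k)%N -> Th k j `<=` Angles R.
Proof.
move=> jk t; rewrite /Thj /Angles /= !in_itv /= => /andP[h1 h2].
have k0 : (0 < k)%N by apply: leq_ltn_trans jk.
have a0 := alpha_gt0 k0.
have ak := alpha_k k0.
have : j.+1%:R <= (k%:R : R) by rewrite ler_nat.
have : 0 <= (j%:R : R) by [].
move=> hj hjk; apply/andP; split; nra.
Qed.

Lemma Thj_disj k i j : (0 < k)%N -> i != j -> Th k i `&` Th k j = set0.
Proof.
move=> k0 ij; apply/seteqP; split => // t []; rewrite /Thj /= !in_itv /=.
move=> /andP[h1 h2] /andP[h3 h4].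
have a0 := alpha_gt0 k0.
case: (ltngtP i j) => [lt|lt|e]; last by rewrite e eqxx in ij.
  have : i.+1%:R <= (j%:R : R) by rewrite ler_nat.
  nra.
have : j.+1%:R <= (i%:R : R) by rewrite ler_nat.
nra.
Qed.

Lemma Thj_big k K : (0 < k)%N ->
  \big[setU/set0]_(j < K) Th k j = `[0, K%:R * al k[%classic.
Proof.
move=> k0; have a0 := alpha_gt0 k0.
elim: K => [|K IH].
  rewrite big_ord0 mul0r; apply/seteqP; split => // t /=; rewrite in_itv /=; lra.
rewrite big_ord_recr /= IH /Thj; apply/seteqP; split => t /=.
  rewrite !in_itv /= -natr1 mulrDl mul1r.
  have : 0 <= (K%:R : R) by [].
  by move=> hK [/andP[h1 h2]|/andP[h1 h2]]; apply/andP; split; nra.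
rewrite !in_itv /= => /andP[h1 h2].
have [hK|hK] := ltP t (K%:R * al k); [left|right]; apply/andP; split => //.
Qed.

Lemma Angles_big k : (0 < k)%N -> Angles R = \big[setU/set0]_(j < k) Th k j.
Proof. by move=> k0; rewrite Thj_big // alpha_k. Qed.

Lemma shift_Thj k j : (j < k)%N ->
  shift_angles (Th k 0) (j%:R * al k) = Th k j.
Proof.
move=> jk.
have k0 : (0 < k)%N by apply: leq_ltn_trans jk.
rewrite (Thj_shift _ k j) /shift_angles /Thj mul0r mul1r.
have key : forall s, s \in `[0, al k[ -> 0 <= s + j%:R * al k < 2 * pi.
  move=> s; rewrite in_itv /= => /andP[h1 h2].
  have H := Thj_sub jk (t := s + j%:R * al k).
  rewrite /Thj /Angles /= !in_itv /= in H; apply: H.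
  apply/andP; split; first by rewrite lerDr.
  by rewrite -natr1 mulrDl mul1r addrC ltrD2l.
apply/seteqP; split => u /= [s hs <-]; exists s => //.
  by rewrite addmod_id // key.
by rewrite addmod_id // key.
Qed.

End Ang.


Section Misc.
Variable R : realType.
Local Notation pi := (@pi R).

Lemma sin_le (x : R) : 0 <= x -> sin x <= x.
Proof.
move=> x0.
have [c _ h] := @MVT_segment R sin cos 0 x x0 (fun y _ => is_derive_sin y)
  (continuous_subspaceT (@continuous_sin R)).
move: h; rewrite sin0 !subr0 => ->.
have := cos_le1 c; nra.
Qed.

Lemma small0 (x C : R) : 0 <= x -> (forall K : nat, x * (K + 8)%:R <= C) -> x = 0.
Proof.
move=> x0 H.
have [->//|xp] := eqVneq x 0.
have xp' : 0 < x by rewrite lt_def xp x0.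
have C0 : 0 <= C by apply: le_trans (H 0%N); rewrite mulr_ge0.
pose K := Num.bound (C / x).
have hK := archi_boundP (divr_ge0 C0 x0).
have := H K.
have : C / x * x = C by rewrite divfK // gt_eqF.
have : (K%:R : R) <= (K + 8)%:R by rewrite ler_nat leq_addr.
rewrite -/K in hK.
move=> h1 h2 h3.
have : C < x * K%:R by rewrite -h2 mulrC ltr_pM2l.
nra.
Qed.

Lemma expi_mul (a b : R) : expi a * expi b = expi (a + b).
Proof. by apply: ceqP; rewrite /expi /= ?cosD ?sinD; ring. Qed.

Lemma expi0 : expi 0 = 1 :> Cplx R.
Proof. by apply: ceqP; rewrite /expi /= ?cos0 ?sin0. Qed.

Lemma expi_conj (a : R) (w : Cplx R) : expi a * w * expi (- a) = w.
Proof. by rewrite mulrC mulrA expi_mul addNr expi0 mul1r. Qed.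

Lemma expi_pi : expi pi = - 1 :> Cplx R.
Proof. by apply: ceqP; rewrite /expi /= ?cospi ?sinpi ?oppr0. Qed.

End Misc.


Section Integ.
Variable R : realType.
Local Notation pi := (@pi R).
Local Notation mu := (@lebesgue_measure R).

Lemma leb_itv (a : R) : 0 < a -> fine (mu `[0, a[%classic) = a.
Proof.
move=> a0; rewrite lebesgue_measure_itv /= lte_fin a0 /=.
by rewrite subr0.
Qed.

Lemma integ_cont (f : R -> R) (a : R) : continuous f ->
  mu.-integrable `[0, a[%classic (EFin \o f).
Proof.
move=> cf.
apply: (@integrableS _ _ _ mu `[0, a]%classic) => //.
- by move=> t /=; rewrite !in_itv /= => /andP[-> /ltW ->].
apply: continuous_compact_integrable; first exact: segment_compact.
exact: continuous_subspaceT.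
Qed.

Lemma int_cos_ge (a : R) : 0 < a <= pi ->
  a * cos a <= Rintegral mu `[0, a[%classic (fun t => cos t).
Proof.
move=> /andP[a0 api].
have cc : continuous (fun _ : R => cos a) by move=> x; exact: cvg_cst.
have := @le_Rintegral _ _ R mu `[0, a[%classic (fun=> cos a) (fun t => cos t)
  (measurable_itv _) (integ_cont _ cc) (integ_cont _ (@continuous_cos R)).
rewrite Rintegral_cst // leb_itv // mulrC; apply.
move=> t; rewrite /= in_itv /= => /andP[t0 ta].
apply: ltW; have := @ltr_cos R t a.
have tpi : t <= pi by lra.
rewrite !in_itv /= t0 tpi (ltW a0) api /= => -> //.
Qed.

Lemma Ecan_diag (a : R) m : 0 < a ->
  complex.Re (Ecan `[0, a[%classic m m) = a / (2 * pi).
Proof.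
move=> a0; rewrite /Ecan /=.
have -> : (fun t : R => cos ((m%:R - m%:R) * t)) = fun=> 1.
  by apply/funext => t; rewrite subrr mul0r cos0.
by rewrite Rintegral_cst // leb_itv // mul1r mulrC.
Qed.

Lemma Ecan_off (a : R) m : 0 < a <= pi ->
  a * cos a / (2 * pi) <= complex.Re (Ecan `[0, a[%classic m m.+1) /\
  a * cos a / (2 * pi) <= complex.Re (Ecan `[0, a[%classic m.+1 m).
Proof.
move=> ha; rewrite /Ecan /=.
have tp : 0 < 2 * pi by rewrite mulr_gt0 // pi_gt0.
have -> : (fun t : R => cos ((m%:R - m.+1%:R) * t)) = fun t => cos t.
  by apply/funext => t; rewrite -natr1 opprD addrA subrr add0r mulN1r cosN.
have -> : (fun t : R => cos ((m.+1%:R - m%:R) * t)) = fun t => cos t.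
  by apply/funext => t; rewrite -natr1 addrAC subrr add0r mul1r.
have := int_cos_ge ha => h.
by split; rewrite mulrC ler_wpM2l // invr_ge0 ltW.
Qed.

End Integ.


Section Polar.
Variable R : realType.
Local Notation pi := (@pi R).
Local Notation pos := (`]0, +oo[%classic : set R).

Lemma polar_setU (Z : set R) T1 T2 :
  polar_set Z (T1 `|` T2) = polar_set Z T1 `|` polar_set Z T2.
Proof.
apply/seteqP; split => z.
  by move=> [r [t [Zr [[T1t|T2t] ->]]]]; [left|right]; exists r, t.
by move=> [|] [r [t [Zr [Tt ->]]]]; exists r, t; split => //; split => //; [left|right].
Qed.

Lemma polar_set0 (Z : set R) : polar_set Z set0 = set0.
Proof. by apply/seteqP; split => // z [r [t [_ [[]]]]]. Qed.

Lemma polar_big (Z : set R) (T : nat -> set R) K :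
  polar_set Z (\big[setU/set0]_(j < K) T j) = \big[setU/set0]_(j < K) polar_set Z (T j).
Proof.
elim: K => [|K IH]; first by rewrite !big_ord0 polar_set0.
by rewrite !big_ord_recr /= polar_setU IH.
Qed.

Lemma polar_disj (Z1 Z2 T1 T2 : set R) :
  Z1 `<=` pos -> Z2 `<=` pos -> T1 `<=` Angles R -> T2 `<=` Angles R ->
  (Z1 `&` Z2 = set0 \/ T1 `&` T2 = set0) ->
  polar_set Z1 T1 `&` polar_set Z2 T2 = set0.
Proof.
move=> Z1p Z2p T1A T2A H.
apply/seteqP; split => // z [[r [t [Zr [Tt ->]]]] [r' [t' [Zr' [Tt' e]]]]].
have r0 : 0 < r by have := Z1p _ Zr; rewrite /= in_itv /= andbT.
have r0' : 0 < r' by have := Z2p _ Zr'; rewrite /= in_itv /= andbT.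
have ht : 0 <= t < 2 * pi by have := T1A _ Tt; rewrite /Angles /= in_itv.
have ht' : 0 <= t' < 2 * pi by have := T2A _ Tt'; rewrite /Angles /= in_itv.
have [rr tt] := polar_inj r0 r0' ht ht' e.
subst r' t'.
case: H => H.
  by have : (Z1 `&` Z2) r by []; rewrite H.
by have : (T1 `&` T2) t by []; rewrite H.
Qed.

Lemma origin_disj (Z T : set R) : Z `<=` pos ->
  [set (0, 0)] `&` polar_set Z T = set0.
Proof.
move=> Zp; apply/seteqP; split => // z [/= -> [r [t [Zr [_ e]]]]].
have r0 : 0 < r by have := Zp _ Zr; rewrite /= in_itv /= andbT.
have := polar_norm r t; rewrite -[r * cos t](f_equal fst e) -[r * sin t](f_equal snd e) /=.
move=> /esym/eqP; rewrite expr0n /= addr0 sqrf_eq0 => /eqP r00.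
by rewrite r00 ltxx in r0.
Qed.

Lemma origin_meas : measurable [set ((0 : R), (0 : R))].
Proof.
have -> : [set ((0 : R), (0 : R))] = [set (0 : R)] `*` [set (0 : R)].
  by apply/seteqP; split => -[x y] /=; [case=> -> ->|case=> -> ->].
by apply: measurableX; exact: measurable_set1.
Qed.

Lemma polar_Rplus_split (Z T : set R) : Z `<=` pos -> T 0 ->
  polar_set (Rplus R) T = [set (0, 0)] `|` (polar_set Z T `|` polar_set (pos `\` Z) T).
Proof.
move=> Zp T0; apply/seteqP; split => z.
  move=> [r [t [Rr [Tt ->]]]].
  have r0 : 0 <= r by move: Rr; rewrite /Rplus /= in_itv /= andbT.
  have [r00|rp] := eqVneq r 0.
    by left; rewrite r00 !mul0r.
  have rp' : pos r by rewrite /= in_itv /= andbT lt_def rp r0.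
  right; have [Zr|Zr] := pselect (Z r).
    by left; exists r, t.
  by right; exists r, t.
case=> [/= ->|[|]].
- exists 0, 0; split; first by rewrite /Rplus /= in_itv /= lexx.
  by split => //; rewrite !mul0r.
- move=> [r [t [Zr [Tt ->]]]]; exists r, t; split => //.
  by have := Zp _ Zr; rewrite /Rplus /= !in_itv /= !andbT => /ltW.
- move=> [r [t [[Zr _] [Tt ->]]]]; exists r, t; split => //.
  by move: Zr; rewrite /Rplus /= !in_itv /= !andbT => /ltW.
Qed.

Lemma polar_X_split (X T : set R) : X `<=` Rplus R ->
  polar_set X T = polar_set (X `&` [set 0]) T `|` polar_set (X `&` pos) T.
Proof.
move=> XR; apply/seteqP; split => z.
  move=> [r [t [Xr [Tt ->]]]].
  have r0 : 0 <= r by have := XR _ Xr; rewrite /Rplus /= in_itv /= andbT.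
  have [r00|rp] := eqVneq r 0.
    by left; exists r, t.
  right; exists r, t; split => //; split => //.
  by rewrite /= in_itv /= andbT lt_def rp r0.
by case=> [[r [t [[Xr _] [Tt ->]]]]|[r [t [[Xr _] [Tt ->]]]]]; exists r, t.
Qed.

Lemma polar_origin_cases (X T : set R) :
  polar_set (X `&` [set 0]) T = set0 \/ polar_set (X `&` [set 0]) T = [set (0, 0)].
Proof.
have [[t [Tt X0]]|H] := pselect (exists t, T t /\ X 0); [right|left].
  apply/seteqP; split => z.
    by move=> [r [t' [[_ /= ->] [_ ->]]]]; rewrite !mul0r.
  by move=> /= ->; exists 0, t; split => //; split => //; rewrite !mul0r.
apply/seteqP; split => // z [r [t [[Xr /= r0] [Tt _]]]].
by apply: H; exists t; split => //; rewrite -r0.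
Qed.

End Polar.


Section Ineq.
Variable R : realType.

Lemma final_ineq (a b H H' c : R) : 0 <= a <= 1 -> 0 <= b <= 1 ->
  H ^+ 2 <= a * b -> H' ^+ 2 <= (1 - a) * (1 - b) -> 0 <= c -> c <= H + H' ->
  (a - b) ^+ 2 <= 4 * (1 - c ^+ 2).
Proof.
move=> /andP[a0 a1] /andP[b0 b1] h1 h2 c0 hc.
set u := a * (1 - b); set v := b * (1 - a); set W := H * H'.
have u0 : 0 <= u by rewrite mulr_ge0 // subr_ge0.
have v0 : 0 <= v by rewrite mulr_ge0 // subr_ge0.
have u1 : u <= 1 by rewrite /u; nra.
have v1 : v <= 1 by rewrite /v; nra.
have hW : W ^+ 2 <= u * v.
  have := ler_pM (sqr_ge0 H) (sqr_ge0 H') h1 h2.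
  have e : a * b * ((1 - a) * (1 - b)) = u * v by rewrite /u /v; ring.
  by rewrite /W exprMn -e.
have hc2 : c ^+ 2 <= (H + H') ^+ 2 by rewrite ler_sqr // ?nnegrE // (le_trans c0 hc).
have hs : (H + H') ^+ 2 <= 1 - (u + v) + 2 * W.
  have -> : (H + H') ^+ 2 = H ^+ 2 + H' ^+ 2 + 2 * W by rewrite /W; ring.
  have -> : 1 - (u + v) + 2 * W = a * b + (1 - a) * (1 - b) + 2 * W by rewrite /u /v; ring.
  lra.
have hW2 : 4 * W ^+ 2 <= (u + v) ^+ 2 by have := sqr_ge0 (u - v); nra.
have hab : (a - b) ^+ 2 = (u - v) ^+ 2 by rewrite /u /v; ring.
have h3 : u + v - 2 * W <= 1 - c ^+ 2 by lra.
have h4 : 0 <= u + v + 2 * W by nra.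
have h5 : 0 <= u + v - 2 * W by nra.
have h6 : u + v + 2 * W <= 4 by nra.
have h7 : (u - v) ^+ 2 <= (u + v - 2 * W) * (u + v + 2 * W) by nra.
rewrite hab; apply: (le_trans h7).
have : (u + v - 2 * W) * (u + v + 2 * W) <= (1 - c ^+ 2) * (u + v + 2 * W) by rewrite ler_wpM2r.
nra.
Qed.

End Ineq.


Section Main.
Variable R : realType.
Variable P : set (R * R) -> opmat R.
Hypothesis HP : is_POVM P.
Hypothesis Hcov : phase_covariant P.
Hypothesis Hcan : forall Th : set R, measurable Th -> Th `<=` Angles R ->
  forall m n, P (polar_set (Rplus R) Th) m n = Ecan Th m n.
Local Notation pi := (@pi R).
Local Notation pos := (`]0, +oo[%classic : set R).
Local Notation al := (@alpha R).
Local Notation Th := (@Thj R).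

Lemma psdP A : measurable A -> psd (P A).
Proof. by case: HP => H _ _; exact: H. Qed.

Lemma Re_natmul (w : Cplx R) n : complex.Re (w *+ n) = complex.Re w *+ n.
Proof. by elim: n => [|n IH] //; rewrite !mulrS ReD IH. Qed.

Lemma al_bounds K : 0 < al (K + 8) < pi / 2 /\ al (K + 8) <= 1 /\
  al (K + 8) * (K + 8)%:R = 2 * pi.
Proof.
have k0 : (0 < K + 8)%N by rewrite addn_gt0 orbT.
have a0 := @alpha_gt0 R _ k0.
have ak := @alpha_k R _ k0.
have k8 : 8%:R <= ((K + 8)%:R : R) by rewrite ler_nat leq_addl.
have pi4 : pi < 4 by have := pihalf_lt2 R; lra.
have pi0 := pi_gt0 R.
have ak' : al (K + 8) * (K + 8)%:R = 2 * pi by rewrite mulrC ak.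
split; last split => //; first (apply/andP; split => //); nra.
Qed.

Lemma ZR (Z : set R) : Z `<=` pos -> Z `<=` Rplus R.
Proof.
by move=> Zp x /Zp; rewrite /Rplus /= !in_itv /= !andbT => /ltW.
Qed.

Lemma sect_meas (Z : set R) K j : measurable Z -> Z `<=` pos ->
  measurable (polar_set Z (Th (K + 8) j)).
Proof. by move=> mZ Zp; apply: sector_meas => //; case: (al_bounds K). Qed.

Lemma k0 K : (0 < K + 8)%N. Proof. by rewrite addn_gt0 orbT. Qed.

Lemma sect_eq (Z : set R) K j m : measurable Z -> Z `<=` pos -> (j < K + 8)%N ->
  P (polar_set Z (Th (K + 8) j)) m m = P (polar_set Z (Th (K + 8) 0)) m m.
Proof.
move=> mZ Zp jk.
have := Hcov mZ (ZR Zp) (measurable_itv _) (Thj_sub (k0 K)) (j%:R * al (K + 8)) m m.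
by rewrite expi_conj shift_Thj.
Qed.

Lemma angles_sum (Z : set R) K m : measurable Z -> Z `<=` pos ->
  P (polar_set Z (Angles R)) m m = P (polar_set Z (Th (K + 8) 0)) m m *+ (K + 8).
Proof.
move=> mZ Zp.
rewrite (@Angles_big R _ (k0 K)) polar_big (@Padd_big R P HP (fun j => polar_set Z (Th (K + 8) j)) (K+8) m m).
- rewrite (eq_bigr (fun=> P (polar_set Z (Th (K + 8) 0)) m m)).
    by rewrite sumr_const card_ord.
  by move=> j _; apply: sect_eq.
- by move=> j _; apply: sect_meas.
- move=> i j hi hj ij; apply: polar_disj => //; try exact: Thj_sub.
  by right; apply: Thj_disj => //; exact: k0.
Qed.

Lemma Th0E K : Th (K + 8) 0 = `[0, al (K + 8)[%classic.
Proof. by rewrite /Thj mul0r mul1r. Qed.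

Lemma E_split (Z : set R) K m n : measurable Z -> Z `<=` pos ->
  Ecan (Th (K + 8) 0) m n = P [set (0, 0)] m n +
    (P (polar_set Z (Th (K + 8) 0)) m n + P (polar_set (pos `\` Z) (Th (K + 8) 0)) m n).
Proof.
move=> mZ Zp.
have Zp' : pos `\` Z `<=` pos by move=> x [].
have mZ' : measurable (pos `\` Z) by apply: measurableD => //; exact: measurable_itv.
have T0 : Th (K + 8) 0 0.
  by rewrite Th0E /= in_itv /= lexx; case: (al_bounds K) => /andP[].
rewrite -Hcan; last exact: Thj_sub (k0 K).
  2: exact: measurable_itv.
rewrite (polar_Rplus_split Zp T0) (Padd2 HP).
- by rewrite (Padd2 HP) //; [exact: sect_meas|exact: sect_meas|
    apply: polar_disj => //; [exact: Thj_sub (k0 K)|exact: Thj_sub (k0 K)|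
    left; apply/seteqP; split => // x [zx []]]].
- exact: origin_meas.
- by apply: measurableU; exact: sect_meas.
- by rewrite setIUr !origin_disj // setU0.
Qed.

Lemma origin0 m : complex.Re (P [set (0, 0)] m m) = 0 /\
  complex.Im (P [set (0, 0)] m m) = 0.
Proof.
have [Im0 Re0] := psd_diag m (psdP (@origin_meas R)).
split => //.
apply: (@small0 R _ 1 Re0) => K.
have mp : measurable pos by exact: measurable_itv.
have := f_equal (@complex.Re R) (E_split K m m mp (@subset_refl _ pos)).
rewrite Th0E Ecan_diag; last by case: (al_bounds K) => /andP[].
rewrite !ReD.
have [_ p0] := psd_diag m (psdP (sect_meas K 0 mp (@subset_refl _ pos))).
have mp' : measurable (pos `\` pos) by apply: measurableD.
have [_ p0'] := psd_diag m (psdP (sect_meas K 0 mp' (fun x (h : (pos `\` pos) x) => h.1))).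
rewrite Th0E in p0 p0'.
move=> e.
have [_ [_ ak]] := al_bounds K.
have tp : 0 < 2 * pi by rewrite mulr_gt0 // pi_gt0.
have : complex.Re (P [set (0, 0)] m m) <= al (K + 8) / (2 * pi) by lra.
move=> h.
have kk : 0 <= ((K + 8)%:R : R) by [].
have : al (K + 8) / (2 * pi) * (K + 8)%:R = 1.
  by rewrite mulrAC ak mulfV // gt_eqF.
nra.
Qed.

End Main.


Section Main2.
Variable R : realType.
Variable P : set (R * R) -> opmat R.
Hypothesis HP : is_POVM P.
Hypothesis Hcov : phase_covariant P.
Hypothesis Hcan : forall Th : set R, measurable Th -> Th `<=` Angles R ->
  forall m n, P (polar_set (Rplus R) Th) m n = Ecan Th m n.
Local Notation pi := (@pi R).
Local Notation pos := (`]0, +oo[%classic : set R).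
Local Notation al := (@alpha R).
Local Notation Th := (@Thj R).
Local Notation Re := (@complex.Re R).

Lemma diag_step (Z : set R) m : measurable Z -> Z `<=` pos ->
  Re (P (polar_set Z (Angles R)) m m) = Re (P (polar_set Z (Angles R)) m.+1 m.+1).
Proof.
move=> mZ Zp.
set a := Re (P (polar_set Z (Angles R)) m m).
set b := Re (P (polar_set Z (Angles R)) m.+1 m.+1).
suff h : (a - b) ^+ 2 = 0 by move/eqP: h; rewrite sqrf_eq0 subr_eq0 => /eqP.
apply: (@small0 R _ 32 (sqr_ge0 _)) => K.
have [/andP[al0 alpi] [al1 ak]] := @al_bounds R K.
have mZ' : measurable (pos `\` Z) by apply: measurableD => //; exact: measurable_itv.
have Zp' : pos `\` Z `<=` pos by move=> x [].
have mS := sect_meas K 0 mZ Zp.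
have mS' := sect_meas K 0 mZ' Zp'.
have nm : m != m.+1 by rewrite neq_ltn ltnSn.
have [_ p0] := psd_diag m (psdP HP mS).
have [_ q0] := psd_diag m.+1 (psdP HP mS).
have [_ p0'] := psd_diag m (psdP HP mS').
have [_ q0'] := psd_diag m.+1 (psdP HP mS').
have csQ := psd_cs (psdP HP mS) nm.
have csQ' := psd_cs (psdP HP mS') nm.
have csO := psd_cs (psdP HP (@origin_meas R)) nm.
have [ ho1 _] := origin0 HP Hcan m.
have [ ho2 _] := origin0 HP Hcan m.+1.
rewrite ho1 ho2 mulr0 in csO.
have hO : Re (P [set (0, 0)] m m.+1) + Re (P [set (0, 0)] m.+1 m) = 0.
  have : ((Re (P [set (0, 0)] m m.+1) + Re (P [set (0, 0)] m.+1 m)) / 2) ^+ 2 = 0.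
    by apply/le_anti; rewrite csO sqr_ge0.
  move/eqP; rewrite sqrf_eq0 mulf_eq0 invr_eq0 pnatr_eq0 orbF => /eqP //.
have Esp i j := f_equal Re (E_split HP Hcan K i j mZ Zp).
have E1 := Esp m m; have E2 := Esp m.+1 m.+1; have E3 := Esp m m.+1; have E4 := Esp m.+1 m.
rewrite !ReD Th0E in E1 E2 E3 E4.
rewrite Ecan_diag // in E1; rewrite Ecan_diag // in E2.
have api : 0 < al (K + 8) <= pi.
  by rewrite al0 /=; have := pi_gt0 R; lra.
have [Eo1 Eo2] := Ecan_off m api.
rewrite ho1 in E1; rewrite ho2 in E2.
have ha : a = Re (P (polar_set Z (Th (K + 8) 0)) m m) * (K + 8)%:R.
  by rewrite /a (angles_sum HP Hcov K m mZ Zp) Re_natmul mulr_natr.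
have hb : b = Re (P (polar_set Z (Th (K + 8) 0)) m.+1 m.+1) * (K + 8)%:R.
  by rewrite /b (angles_sum HP Hcov K m.+1 mZ Zp) Re_natmul mulr_natr.
rewrite Th0E in ha hb p0 q0 p0' q0' csQ csQ'.
set α := al (K + 8) in al0 alpi al1 ak E1 E2 E3 E4 Eo1 Eo2 ha hb p0 q0 p0' q0' csQ csQ' api.
set κ := ((K + 8)%:R : R) in ak ha hb *.
set T := `[0, α[%classic in E1 E2 E3 E4 Eo1 Eo2 ha hb p0 q0 p0' q0' csQ csQ'.
set p := Re (P (polar_set Z T) m m) in ha p0 csQ E1.
set q := Re (P (polar_set Z T) m.+1 m.+1) in hb q0 csQ E2.
set p' := Re (P (polar_set (pos `\` Z) T) m m) in p0' csQ' E1.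
set q' := Re (P (polar_set (pos `\` Z) T) m.+1 m.+1) in q0' csQ' E2.
set hq := (Re (P (polar_set Z T) m m.+1) + Re (P (polar_set Z T) m.+1 m)) / 2 in csQ.
set hq' := (Re (P (polar_set (pos `\` Z) T) m m.+1) +
            Re (P (polar_set (pos `\` Z) T) m.+1 m)) / 2 in csQ'.
have tp : 0 < 2 * pi by rewrite mulr_gt0 // pi_gt0.
have pi4 : pi < 4 by have := pihalf_lt2 R; lra.
have κ0 : 0 < κ by rewrite /κ ltr0n addn_gt0 orbT.
have rk : α / (2 * pi) * κ = 1 by rewrite mulrAC ak mulfV // gt_eqF.
have hsum : α * cos α / (2 * pi) <= hq + hq'.
  have e : hq + hq' = (Re (Ecan T m m.+1) + Re (Ecan T m.+1 m)) / 2.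
    rewrite /hq /hq' E3 E4; move: hO; lra.
  rewrite e; lra.
have c0 : 0 <= cos α by apply: cos_ge0_pihalf; apply/andP; split; lra.
set r := α / (2 * pi) in E1 E2 rk.
have fi := @final_ineq R a b (κ * hq) (κ * hq') (cos α).
have h1 : 0 <= a <= 1.
  apply/andP; split; first by rewrite ha mulr_ge0 // ltW.
  have := mulr_ge0 p0' (ltW κ0); nra.
have h2 : 0 <= b <= 1.
  apply/andP; split; first by rewrite hb mulr_ge0 // ltW.
  have := mulr_ge0 q0' (ltW κ0); nra.
have h3 : (κ * hq) ^+ 2 <= a * b.
  rewrite ha hb exprMn.
  have -> : p * κ * (q * κ) = κ ^+ 2 * (p * q) by ring.
  by rewrite ler_wpM2l // sqr_ge0.
have h4 : (κ * hq') ^+ 2 <= (1 - a) * (1 - b).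
  have -> : 1 - a = p' * κ by rewrite ha; nra.
  have -> : 1 - b = q' * κ by rewrite hb; nra.
  rewrite exprMn.
  have -> : p' * κ * (q' * κ) = κ ^+ 2 * (p' * q') by ring.
  by rewrite ler_wpM2l // sqr_ge0.
have h5 : cos α <= κ * hq + κ * hq'.
  rewrite -mulrDr.
  have : α * cos α / (2 * pi) * κ = cos α.
    have e2 : α * cos α / (2 * pi) * κ = cos α * (r * κ) by rewrite /r; ring.
    by rewrite e2 rk mulr1.
  move=> e; rewrite -e mulrC ler_wpM2l // ltW //.
have := fi h1 h2 h3 h4 c0 h5.
have s0 : 0 <= sin α by apply: sin_ge0_pi; apply/andP; split; lra.
have sl := sin_le (ltW al0).
have sc := cos2Dsin2 α.
move=> hf.
have hf2 : (a - b) ^+ 2 <= 4 * α ^+ 2 by nra.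
have : (a - b) ^+ 2 * κ <= 4 * α ^+ 2 * κ by rewrite ler_wpM2r // ltW.
have : 4 * α ^+ 2 * κ = 4 * α * (2 * pi) by rewrite -ak; ring.
nra.
Qed.

End Main2.


Section Main3.
Variable R : realType.
Variable P : set (R * R) -> opmat R.
Hypothesis HP : is_POVM P.
Hypothesis Hcov : phase_covariant P.
Hypothesis Hcan : forall Th : set R, measurable Th -> Th `<=` Angles R ->
  forall m n, P (polar_set (Rplus R) Th) m n = Ecan Th m n.
Local Notation pi := (@pi R).
Local Notation pos := (`]0, +oo[%classic : set R).
Local Notation Re := (@complex.Re R).
Local Notation Im := (@complex.Im R).

Lemma angles_meas (Z : set R) : measurable Z -> Z `<=` pos ->
  measurable (polar_set Z (Angles R)).
Proof.
move=> mZ Zp; rewrite (@Angles_big R 8) // polar_big.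
by apply: bigsetU_measurable => j _; exact: (sect_meas 0).
Qed.

Lemma origin_part_meas (X T : set R) : measurable (polar_set (X `&` [set 0]) T).
Proof. by case: (polar_origin_cases X T) => ->; [exact: measurable0|exact: origin_meas]. Qed.

Lemma origin_part0 (X T : set R) m : P (polar_set (X `&` [set 0]) T) m m = 0.
Proof.
case: (polar_origin_cases X T) => ->; first exact: P0.
by have [h1 h2] := origin0 HP Hcan m; apply: ceqP.
Qed.

Lemma Xpos_sub (X : set R) : X `&` pos `<=` pos. Proof. by move=> x []. Qed.

Lemma Xpos_meas (X : set R) : measurable X -> measurable (X `&` pos).
Proof. by move=> mX; apply: measurableI => //; exact: measurable_itv. Qed.

Lemma angles_X_split (X : set R) m n : measurable X -> X `<=` Rplus R ->
  P (polar_set X (Angles R)) m n =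
  P (polar_set (X `&` [set 0]) (Angles R)) m n + P (polar_set (X `&` pos) (Angles R)) m n.
Proof.
move=> mX XR; rewrite (polar_X_split _ XR) (Padd2 HP) //.
- exact: origin_part_meas.
- by apply: angles_meas; [exact: Xpos_meas|exact: Xpos_sub].
- case: (polar_origin_cases X (Angles R)) => ->; first by rewrite set0I.
  exact: origin_disj (@Xpos_sub X).
Qed.

Lemma angles_X_meas (X : set R) : measurable X -> X `<=` Rplus R ->
  measurable (polar_set X (Angles R)).
Proof.
move=> mX XR; rewrite (polar_X_split _ XR); apply: measurableU.
  exact: origin_part_meas.
by apply: angles_meas; [exact: Xpos_meas|exact: Xpos_sub].
Qed.

Lemma diag_X (X : set R) m : measurable X -> X `<=` Rplus R ->
  P (polar_set X (Angles R)) m m = P (polar_set (X `&` pos) (Angles R)) m m.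
Proof. by move=> mX XR; rewrite angles_X_split // origin_part0 add0r. Qed.

Lemma diag_const (Z : set R) n : measurable Z -> Z `<=` pos ->
  Re (P (polar_set Z (Angles R)) n n) = Re (P (polar_set Z (Angles R)) 0 0).
Proof.
move=> mZ Zp; elim: n => // n IH.
by rewrite -(diag_step HP Hcov Hcan n mZ Zp).
Qed.

Lemma mAngles : measurable (Angles R).
Proof. exact: measurable_itv. Qed.

Lemma offdiag (X : set R) m n : measurable X -> X `<=` Rplus R -> m != n ->
  P (polar_set X (Angles R)) m n = 0.
Proof.
move=> mX XR mn.
have H := Hcov mX XR mAngles (@subset_refl _ (Angles R)) (pi / (m%:R - n%:R)) m n.
rewrite shift_Angles in H.
move: H; set w := P (polar_set X (Angles R)) m n => H.
have d0 : (m%:R - n%:R : R) != 0 by rewrite subr_eq0 eqr_nat.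
have e : expi (pi / (m%:R - n%:R) * m%:R) * w * expi (- (pi / (m%:R - n%:R) * n%:R))
   = expi pi * w.
  rewrite mulrAC expi_mul; congr (expi _ * _); field => //.
rewrite e expi_pi mulN1r in H.
have ww : w + w = 0 by rewrite -{1}H addNr.
apply: ceqP.
  by have := f_equal Re ww; rewrite ReD /=; lra.
by have := f_equal Im ww; rewrite ImD /=; lra.
Qed.

Lemma Rplus_pos : Rplus R `&` pos = pos.
Proof.
apply/seteqP; split => x; first by case.
move=> hx; split => //; move: hx; rewrite /Rplus /= !in_itv /= !andbT; exact: ltW.
Qed.

Lemma pos_total : Re (P (polar_set pos (Angles R)) 0 0) = 1.
Proof.
have mR : measurable (Rplus R) by exact: measurable_itv.
have := diag_X 0 mR (@subset_refl _ _); rewrite Rplus_pos => <-.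
rewrite (Hcan mAngles (@subset_refl _ _)) /Angles Ecan_diag.
  by rewrite mulfV // gt_eqF // mulr_gt0 // pi_gt0.
by rewrite mulr_gt0 // pi_gt0.
Qed.

End Main3.


Section Nu.
Variable R : realType.
Variable P : set (R * R) -> opmat R.
Hypothesis HP : is_POVM P.
Hypothesis Hcov : phase_covariant P.
Hypothesis Hcan : forall Th : set R, measurable Th -> Th `<=` Angles R ->
  forall m n, P (polar_set (Rplus R) Th) m n = Ecan Th m n.
Local Notation pi := (@pi R).
Local Notation pos := (`]0, +oo[%classic : set R).
Local Notation Re := (@complex.Re R).
Local Notation Im := (@complex.Im R).

Definition nu_fun (A : set R) : \bar R :=
  if pselect (measurable A) then (Re (P (polar_set (A `&` pos) (Angles R)) 0 0))%:E
  else 0%E.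

Lemma polar_set0Z (T : set R) : polar_set set0 T = set0.
Proof. by apply/seteqP; split => // z [r [t [[]]]]. Qed.

Lemma nu0 : nu_fun set0 = 0%E.
Proof.
rewrite /nu_fun; case: pselect => [h|//].
by rewrite set0I polar_set0Z (P0 HP).
Qed.

Lemma nu_ge0 A : (0 <= nu_fun A)%E.
Proof.
rewrite /nu_fun; case: pselect => // mA.
rewrite lee_fin.
have [_] := psd_diag 0 (psdP HP (angles_meas (Xpos_meas mA) (@Xpos_sub R A))).
by [].
Qed.

Lemma nu_sigma : semi_sigma_additive nu_fun.
Proof.
move=> F mF tF mU.
pose G i := polar_set (F i `&` pos) (Angles R).
have mG : forall i, measurable (G i).
  by move=> i; apply: angles_meas; [exact: Xpos_meas|exact: Xpos_sub].
have tG : trivIset setT G.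
  move=> i j _ _ hij; apply/eqP/negPn/negP => ij.
  have : G i `&` G j = set0.
    apply: polar_disj; try exact: Xpos_sub; try exact: (@subset_refl _ (Angles R)).
    left; apply/seteqP; split => // x [[Fi _] [Fj _]].
    by move/eqP: ij; apply; apply: (tF i j) => //; exists x.
  by move=> e; move: hij; rewrite e => -[].
have UG : \bigcup_i G i = polar_set ((\bigcup_i F i) `&` pos) (Angles R).
  apply/seteqP; split => z.
    by move=> [i _ [r [t [[Fr pr] [Tt ->]]]]]; exists r, t; split => //; split => //; exists i.
  by move=> [r [t [[[i _ Fr] pr] [Tt ->]]]]; exists i => //; exists r, t.
have [H1 _] := (let: And3 _ _ h := HP in h) G mG tG 0%N 0%N.
rewrite UG in H1.
have e1 : (fun n => \sum_(0 <= i < n) nu_fun (F i)) =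
          (fun n => (\sum_(i < n) Re (P (G i) 0 0))%:E).
  apply/funext => n; rewrite big_mkord -sumEFin; apply: eq_bigr => i _.
  by rewrite /nu_fun; case: pselect => // /(_ (mF i)).
rewrite e1 /nu_fun; case: pselect => [h|//].
apply: cvg_EFin; first by near=> n.
exact: H1.
Unshelve. all: end_near.
Qed.

HB.instance Definition _ := isMeasure.Build _ _ _ nu_fun nu0 nu_ge0 nu_sigma.

Lemma nu_setT : nu_fun setT = 1%E.
Proof.
rewrite /nu_fun; case: pselect => [h|//].
by rewrite setTI (pos_total HP Hcan).
Qed.

HB.instance Definition _ := Measure_isProbability.Build _ _ _ nu_fun nu_setT.

Lemma main_sec : exists nu : probability R R,
    nu (Rplus R) = 1%E /\
    forall X : set R, measurable X -> X `<=` Rplus R ->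
      forall m n, P (polar_set X (Angles R)) m n =
                  cR (fine (nu X)) * ((m == n)%:R : Cplx R).
Proof.
exists (Probability.clone _ _ _ nu_fun _); split.
  change (nu_fun (Rplus R) = 1%E).
  rewrite /nu_fun; case: pselect => [h|h]; last by exfalso; apply: h; exact: measurable_itv.
  by rewrite Rplus_pos (pos_total HP Hcan).
move=> X mX XR m n.
change (P (polar_set X (Angles R)) m n = cR (fine (nu_fun X)) * ((m == n)%:R : Cplx R)).
rewrite /nu_fun; case: pselect => [h|//] /=.
case: (eqVneq m n) => [<-|mn].
  rewrite mulr1; apply: ceqP.
    by rewrite (diag_X HP Hcan m mX XR) (diag_const HP Hcov Hcan m (Xpos_meas mX) (@Xpos_sub R X)).
  by have [-> _] := psd_diag m (psdP HP (angles_X_meas mX XR)).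
by rewrite ?(negbTE mn) mulr0 (offdiag Hcov mX XR mn).
Qed.

End Nu.

Theorem mainTheorem6 (R : realType) (P : set (R * R) -> opmat R) :
  is_POVM P -> phase_covariant P ->
  (forall Th : set R, measurable Th -> Th `<=` Angles R ->
     forall m n, P (polar_set (Rplus R) Th) m n = Ecan Th m n) ->
  exists nu : probability R R,
    nu (Rplus R) = 1%E /\
    forall X : set R, measurable X -> X `<=` Rplus R ->
      forall m n, P (polar_set X (Angles R)) m n =
                  cR (fine (nu X)) * ((m == n)%:R : Cplx R).
Proof.
move=> HP Hcov Hcan; exact: (main_sec HP Hcov Hcan).
Qed.
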